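(* For each $n\ge1$, the maximum number of target-free cliques in a simple directed graph on $n$ nodes equals the maximum number of maximal cliques in a simple undirected graph on $n$ nodes.
   Context: In a simple directed graph, a clique is a nonempty set of nodes pairwise bidirectionally connected; a target of a clique $\sigma$ is a node $k\notin\sigma$ with $i\to k$ for all $i\in\sigma$; a target-free clique has no target. In an undirected graph, a maximal clique is a clique not properly contained in another clique. *)

(* Defs.v *)
From mathcomp Require Import all_boot.
Set Implicit Arguments. Unset Strict Implicit. Unset Printing Implicit Defensive.

(* A graph on the vertex set 'I_n is given by its adjacency relation,
   stored as a finite function so that graphs form a finite type. *)
Definition graph (n : nat) := {ffun 'I_n * 'I_n -> bool}.

Definition adj n (g : graph n) (i j : 'I_n) : bool := g (i, j).

(* simple directed graph: no loops (arcs i->j and j->i may both exist) *)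
Definition simple_digraph n (g : graph n) : bool :=
  [forall i, ~~ adj g i i].

Definition simple_ugraph n (g : graph n) : bool :=
  [forall i, ~~ adj g i i] && [forall i, forall j, adj g i j == adj g j i].

Definition dclique n (g : graph n) (s : {set 'I_n}) : bool :=
  (s != set0) &&
  [forall i in s, forall j in s, (i != j) ==> (adj g i j && adj g j i)].

Definition target n (g : graph n) (s : {set 'I_n}) (k : 'I_n) : bool :=
  (k \notin s) && [forall i in s, adj g i k].

Definition target_free n (g : graph n) (s : {set 'I_n}) : bool :=
  dclique g s && [forall k, ~~ target g s k].

Definition uclique n (g : graph n) (s : {set 'I_n}) : bool :=
  [forall i in s, forall j in s, (i != j) ==> adj g i j].

Definition maximal_uclique n (g : graph n) (s : {set 'I_n}) : bool :=
  uclique g s && [forall t : {set 'I_n}, (s \proper t) ==> ~~ uclique g t].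

Definition num_target_free n (g : graph n) : nat :=
  #|[set s : {set 'I_n} | target_free g s]|.

Definition num_maximal_cliques n (g : graph n) : nat :=
  #|[set s : {set 'I_n} | maximal_uclique g s]|.

(* Main.v *)
Require Import Defs.
From mathcomp Require Import all_boot.
Set Implicit Arguments. Unset Strict Implicit. Unset Printing Implicit Defensive.

Definition symg n (g : graph n) : graph n :=
  [ffun p : 'I_n * 'I_n => g p && g (p.2, p.1)].

Lemma symg_simple n (g : graph n) : simple_digraph g -> simple_ugraph (symg g).
Proof.
move=> /forallP H; apply/andP; split.
  apply/forallP=> i; rewrite /adj ffunE /=; move: (H i); rewrite /adj.
  by case: (g (i, i)).
apply/forallP=> i; apply/forallP=> j; by rewrite /adj !ffunE /= andbC.
Qed.

Lemma tf_max n (g : graph n) s : target_free g s -> maximal_uclique (symg g) s.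
Proof.
case/andP=> /andP [_ /forall_inP Hc] /forallP Ht; apply/andP; split.
  apply/forall_inP=> i iS; apply/forall_inP=> j jS; apply/implyP=> ij.
  by move/forall_inP: (Hc i iS) => /(_ j jS) /implyP /(_ ij); rewrite /adj ffunE.
apply/forallP=> t; apply/implyP=> /properP [st [k kt ks]]; apply/negP.
move/forall_inP=> Hu; move: (Ht k); rewrite /target ks /=; apply/negP; rewrite negbK.
apply/forall_inP=> i iS.
have it : i \in t by apply: (subsetP st).
have ik : i != k by apply/eqP=> E; rewrite -E iS in ks.
move/forall_inP: (Hu i it) => /(_ k kt) /implyP /(_ ik).
by rewrite /adj ffunE => /andP [].
Qed.

Lemma mc_tf n (g : graph n) s : 0 < n -> simple_ugraph g ->
  maximal_uclique g s -> target_free g s.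
Proof.
move=> hn /andP [_ /forallP Hs] /andP [/forall_inP Hu /forallP Hm].
have sym i j : adj g i j = adj g j i by move/forallP: (Hs i) => /(_ j) /eqP.
apply/andP; split.
  apply/andP; split.
    apply/negP=> /eqP s0; subst s.
    move: (Hm [set Ordinal hn]); rewrite proper0.
    have ne : [set Ordinal hn] != set0 by apply/set0Pn; exists (Ordinal hn); rewrite set11.
    rewrite ne /=.
    move=> /negP; apply; apply/forall_inP=> i; rewrite inE => /eqP ->.
    by apply/forall_inP=> j; rewrite inE => /eqP ->; rewrite eqxx.
  apply/forall_inP=> i iS; apply/forall_inP=> j jS; apply/implyP=> ij.
  have h := (Hu i iS); move/forall_inP: h => /(_ j jS) /implyP /(_ ij) h.
  by rewrite h -sym h.
apply/forallP=> k; apply/negP=> /andP [ks /forall_inP Hk].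
move: (Hm (k |: s)); rewrite properUr; last by rewrite sub1set.
move=> /= /negP; apply; apply/forall_inP=> i; rewrite in_setU1 => /orP [/eqP ->|iS];
  apply/forall_inP=> j; rewrite in_setU1 => /orP [/eqP ->|jS]; apply/implyP=> ij.
- by rewrite eqxx in ij.
- by rewrite sym; apply: Hk.
- by apply: Hk.
- by move/forall_inP: (Hu i iS) => /(_ j jS) /implyP /(_ ij).
Qed.

Theorem lemma8 (n : nat) (hn : 1 <= n) :
  \max_(g : graph n | simple_digraph g) num_target_free g =
  \max_(g : graph n | simple_ugraph g) num_maximal_cliques g.
Proof.
apply/eqP; rewrite eqn_leq; apply/andP; split.
  apply/bigmax_leqP=> g sg.
  apply: leq_trans (leq_bigmax_cond _ (symg_simple sg)).
  apply: subset_leq_card; apply/subsetP=> s; rewrite !inE; exact: tf_max.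
apply/bigmax_leqP=> g sg.
have sd : simple_digraph g by case/andP: sg.
apply: leq_trans (leq_bigmax_cond _ sd).
apply: subset_leq_card; apply/subsetP=> s; rewrite !inE; exact: mc_tf.
Qed.
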